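(* Let $A\in\mathbb{R}^{n\times d}$, $k\ge1$, and suppose $\lambda:=\|A-A_k\|_F^2/k>0$. Let $C_1\in\mathbb{R}^{n\times d'}$ and $c_1>0$ satisfy $AA^T+\lambda I_n\preceq c_1\,(C_1C_1^T+\lambda I_n)$, and let $Z$ be a matrix with orthonormal columns spanning the column space of $C_1$. Then for every $i=1,\dots,d$, $$\|a_i-ZZ^Ta_i\|_2^2\le c_1\,\lambda\,\bar\tau_i(A).$$
   Context: $A$ has columns $a_1,\dots,a_d$. $A_k$ denotes a best rank-$k$ approximation of $A$ in Frobenius norm. $\preceq$ is the Loewner order and $M^+$ the Moore–Penrose pseudoinverse. The ridge leverage score is $\bar\tau_i(A)=a_i^T\big(AA^T+\frac{\|A-A_k\|_F^2}{k}I_n\big)^+a_i$. *)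

(* Defs.v *)
From HB Require Import structures.
From mathcomp Require Import all_boot all_order all_algebra.
Set Implicit Arguments. Unset Strict Implicit. Unset Printing Implicit Defensive.
Import Order.TTheory GRing.Theory Num.Theory.
Local Open Scope ring_scope.

(* Squared Frobenius norm: sum of squares of entries. For a column vector
   this is the squared Euclidean norm. *)
Definition frob2 (R : realFieldType) (m n : nat) (M : 'M[R]_(m, n)) : R :=
  \sum_(i < m) \sum_(j < n) M i j ^+ 2.

Definition best_rank_approx (R : realFieldType) (m n k : nat)
    (A Ak : 'M[R]_(m, n)) : Prop :=
  (\rank Ak <= k)%N /\
  forall B : 'M[R]_(m, n), (\rank B <= k)%N -> frob2 (A - Ak) <= frob2 (A - B).

Definition loewner_le (R : realFieldType) (n : nat) (M N : 'M[R]_n) : Prop :=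
  forall x : 'cV[R]_n, 0 <= (x^T *m (N - M) *m x) 0 0.

Definition is_pinv (R : realFieldType) (m n : nat)
    (M : 'M[R]_(m, n)) (X : 'M[R]_(n, m)) : Prop :=
  [/\ M *m X *m M = M, X *m M *m X = X,
      (M *m X)^T = M *m X & (X *m M)^T = X *m M].

(* Ridge leverage score tau_i(A) = a_i^T (A A^T + lambda I)^+ a_i,
   with P the pseudoinverse of A A^T + lambda I. *)
Definition ridge_score (R : realFieldType) (n d : nat)
    (A : 'M[R]_(n, d)) (P : 'M[R]_n) (i : 'I_d) : R :=
  ((col i A)^T *m P *m col i A) 0 0.

(* Main.v *)
Require Import Defs.
From HB Require Import structures.
From mathcomp Require Import all_boot all_order all_algebra.
From mathcomp Require Import lra.
Import Order.TTheory GRing.Theory Num.Theory.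
Local Open Scope ring_scope.

Lemma rv_sq (R : realFieldType) m (v : 'rV[R]_m) :
  (v *m v^T) 0 0 = \sum_j v 0 j * v 0 j.
Proof. by rewrite mxE; apply: eq_bigr => j _; rewrite mxE. Qed.

Lemma rv_sq_ge0 (R : realFieldType) m (v : 'rV[R]_m) : 0 <= (v *m v^T) 0 0.
Proof. by rewrite rv_sq; apply: sumr_ge0 => j _; rewrite -expr2 sqr_ge0. Qed.

Lemma rv_sq_eq0 (R : realFieldType) m (v : 'rV[R]_m) : (v *m v^T) 0 0 = 0 -> v = 0.
Proof.
rewrite rv_sq => H; apply/matrixP => i j; rewrite (ord1 i) mxE.
have hp : forall j, xpredT j -> 0 <= v 0 j * v 0 j.
  by move=> k _; rewrite -expr2 sqr_ge0.
have := @psumr_eq0P _ _ xpredT (fun j => v 0 j * v 0 j) hp H j isT.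
by move/eqP; rewrite mulf_eq0 orbb => /eqP.
Qed.

Lemma cv_sq_ge0 (R : realFieldType) m (v : 'cV[R]_m) : 0 <= (v^T *m v) 0 0.
Proof. by have := (@rv_sq_ge0 _ _ v^T); rewrite trmxK. Qed.

Lemma mxDE (R : realFieldType) m p (B C : 'M[R]_(m, p)) i j :
  (B + C) i j = B i j + C i j.
Proof. by rewrite mxE. Qed.
Lemma mxBE (R : realFieldType) m p (B C : 'M[R]_(m, p)) i j :
  (B - C) i j = B i j - C i j.
Proof. by rewrite !mxE. Qed.
Lemma mxZE (R : realFieldType) m p (c : R) (B : 'M[R]_(m, p)) i j :
  (c *: B) i j = c * B i j.
Proof. by rewrite mxE. Qed.

Theorem mainTheorem5 (R : realFieldType) (n d d' k r : nat)
    (A Ak : 'M[R]_(n, d)) (C1 : 'M[R]_(n, d')) (c1 : R)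
    (Z : 'M[R]_(n, r)) (P : 'M[R]_n) :
  (0 < k)%N ->
  best_rank_approx k A Ak ->
  let lambda := frob2 (A - Ak) / k%:R in
  0 < lambda ->
  0 < c1 ->
  loewner_le (A *m A^T + lambda%:M) (c1 *: (C1 *m C1^T + lambda%:M)) ->
  Z^T *m Z = 1%:M ->
  (Z^T == C1^T)%MS ->
  is_pinv (A *m A^T + lambda%:M) P ->
  forall i : 'I_d,
    frob2 (col i A - Z *m Z^T *m col i A) <= c1 * lambda * ridge_score A P i.
Proof.
move=> _ _ lambda lam_gt0 c1_gt0 Hlo HZ /andP[_ /submxP[W HW]] [HP1 _ _ _] i.
set M := A *m A^T + lambda%:M.
set N := C1 *m C1^T + lambda%:M.
set a := col i A.
set x := a - Z *m Z^T *m a.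
have MT : M^T = M by rewrite /M linearD /= trmx_mul trmxK tr_scalar_mx.
have kerM : forall u : 'rV[R]_n, u *m M = 0 -> u = 0.
  move=> u Hu.
  have H0 : (u *m M *m u^T) 0 0 = 0 by rewrite Hu mul0mx mxE.
  have E : u *m M *m u^T = (u *m A) *m (u *m A)^T + lambda *: (u *m u^T).
    by rewrite /M mulmxDr mulmxDl trmx_mul !mulmxA mul_mx_scalar -scalemxAl.
  move: H0; rewrite E mxDE mxZE => H0.
  have h1 := (@rv_sq_ge0 _ _ (u *m A)); have h2 := (@rv_sq_ge0 _ _ u).
  apply: (@rv_sq_eq0 _ _).
  have : lambda * (u *m u^T) 0 0 = 0.
    apply/eqP; rewrite eq_le; apply/andP; split; last exact: mulr_ge0 (ltW _) h2.
    by rewrite -H0 lerDr.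
  by move/eqP; rewrite mulf_eq0 (gt_eqF lam_gt0) /= => /eqP.
have Mpsd : forall v : 'cV[R]_n, 0 <= (v^T *m M *m v) 0 0.
  move=> v.
  have E : v^T *m M *m v^T^T = (v^T *m A) *m (v^T *m A)^T + lambda *: (v^T *m v^T^T).
    by rewrite /M mulmxDr mulmxDl trmx_mul !mulmxA mul_mx_scalar -scalemxAl.
  rewrite trmxK in E; rewrite E mxDE mxZE.
  have h1 := (@rv_sq_ge0 _ _ (v^T *m A)); have h2 := (@cv_sq_ge0 _ _ v).
  by rewrite addr_ge0 // mulr_ge0 // ltW.
have MP1 : M *m P = 1%:M.
  apply/eqP; rewrite -subr_eq0; apply/eqP/row_matrixP => j.
  rewrite row0; apply: kerM.
  by rewrite -row_mul mulmxBl HP1 mul1mx subrr row0.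
have PTM : P^T *m M = 1%:M by rewrite -MT -trmx_mul MP1 tr_scalar_mx.
have xTZ : x^T *m Z = 0.
  by rewrite /x linearB /= !trmx_mul trmxK mulmxBl -!mulmxA HZ mulmx1 subrr.
have xx : x^T *m x = x^T *m a.
  transitivity (x^T *m (a - Z *m Z^T *m a)); first by [].
  by rewrite mulmxBr !mulmxA xTZ !mul0mx subr0.
have C1x : C1^T *m x = 0.
  by rewrite /x mulmxBr HW -!mulmxA (mulmxA Z^T) HZ mul1mx subrr.
have xC1 : x^T *m C1 = 0 by rewrite -[C1]trmxK -trmx_mul C1x trmx0.
have xNx : x^T *m N *m x = lambda *: (x^T *m x).
  by rewrite /N mulmxDr mulmxDl !mulmxA xC1 !mul0mx add0r mul_mx_scalar -scalemxAl.
have hx := Hlo x.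
rewrite /= -/N -/M (mulmxBr x^T (c1 *: N) M) (mulmxBl (x^T *m (c1 *: N)) (x^T *m M) x) -scalemxAr -scalemxAl xNx mxBE !mxZE in hx.
have rs : ridge_score A P i = (a^T *m P *m a) 0 0 by [].
rewrite rs.
clearbody x a M N.
have fx : frob2 x = (x^T *m x) 0 0.
  by rewrite /frob2 mxE; apply: eq_bigr => j _; rewrite big_ord1 mxE expr2.
rewrite fx.
set t := c1 * lambda.
have hu := Mpsd (x - t *: (P *m a)).
have axT : (a^T *m x) 0 0 = (x^T *m a) 0 0.
  by rewrite -[a^T *m x]trmxK trmx_mul trmxK mxE.
have E : (x - t *: (P *m a))^T *m M *m (x - t *: (P *m a)) =
   x^T *m M *m x - t *: (a^T *m x) - (t *: (x^T *m a) - (t * t) *: (a^T *m P *m a)).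
  have uT : (x - t *: (P *m a))^T = x^T - t *: (a^T *m P^T).
    by rewrite linearB linearZ /= trmx_mul.
  have f1 : x^T *m M *m (P *m a) = x^T *m a by rewrite mulmxA -(mulmxA x^T) MP1 mulmx1.
  have f2 : a^T *m P^T *m M *m x = a^T *m x by rewrite -(mulmxA a^T) PTM mulmx1.
  have f3 : a^T *m P^T *m M *m (P *m a) = a^T *m P *m a.
    by rewrite -(mulmxA a^T) PTM mulmx1 mulmxA.
  rewrite uT mulmxBl mulmxBr mulmxBl -!scalemxAl -!scalemxAr f2 mulmxBl -scalemxAl f1 f3 scalerBr scalerA.
  done.
rewrite E !mxBE !mxZE axT in hu.
rewrite xx in hx; rewrite xx.
have tpos : 0 < t by rewrite /t mulr_gt0.
move: hu hx tpos; rewrite -/t.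
set m := (x^T *m M *m x) 0 0; set s := (x^T *m a) 0 0; set g := (a^T *m P *m a) 0 0.
move=> hu hx tpos.
have hx' : m <= t * s by rewrite /t; lra.
have h : 0 <= t * (t * g - s) by nra.
by move: h; rewrite pmulr_rge0 // subr_ge0.
Qed.
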